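(* Let $m,n\ge 0$, $0\le k\le\min(m,n)$, and let $i,j$ be integers with $0\le i\le m$, $0\le j\le n$, $k\le i+j\le m+n-k$. Then $c_{m,n,k}(i,j)$ equals the coefficient of $x^jy^i$ in the power series expansion of $$\frac{(x+y)^{i+j-k}}{(1-x)^{m-k+1}(1+y)^{n-k+1}}.$$ In particular (case $i+j=k$), the coordinate of $f^i\phi_m\otimes f^{k-i}\phi_n$ in $\phi_{m,n,k}$ is the coefficient of $x^{k-i}y^i$ in $\frac{1}{(1-x)^{m-k+1}(1+y)^{n-k+1}}$.
   Context: Let $e,f,h$ be the standard basis of $\mathfrak{sl}(2,\mathbb{C})$. $V(n)$ is the irreducible representation of highest weight $n$ with fixed highest weight vector $\phi_n$; $\{f^i\phi_n\}_{0\le i\le n}$ is a basis, $f^{n+1}\phi_n=0$. $\mathfrak{sl}(2)$ acts on $V(m)\otimes V(n)$ by $X(v\otimes w)=Xv\otimes w+v\otimes Xw$. For $0\le k\le\min(m,n)$, let $\phi_{m,n,k}=\sum_{l=0}^{k}(-1)^l\binom{m-l}{k-l}\binom{n-k+l}{l} f^l\phi_m\otimes f^{k-l}\phi_n$ (a highest weight vector of weight $m+n-2k$). The coordinates $c_{m,n,k}(i,j)$ are defined by $f^{p-k}\phi_{m,n,k}=\sum_{i+j=p,\,0\le i\le m,\,0\le j\le n} c_{m,n,k}(i,j)\, f^i\phi_m\otimes f^j\phi_n$ for $k\le p\le m+n-k$. *)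

(* Defs.v *)
From HB Require Import structures.
From mathcomp Require Import all_boot all_order all_algebra.
Set Implicit Arguments. Unset Strict Implicit. Unset Printing Implicit Defensive.
Import Order.TTheory GRing.Theory Num.Theory.
Local Open Scope ring_scope.

(* ---------- The tensor product V(m) (x) V(n) in coordinates ----------
   A vector of V(m) (x) V(n) is given by its coordinates
   v a b = coordinate on  f^a phi_m (x) f^b phi_n  (only 0<=a<=m, 0<=b<=n matter).
   Coefficients are integers (all coefficients involved are integers;
   they embed in C). *)
Definition tvec := nat -> nat -> int.

(* the vector f^a phi_m (x) f^b phi_n  (zero if a > m or b > n, as f^{m+1}phi_m = 0) *)
Definition tbasis (m n a b : nat) : tvec :=
  fun i j => ((i == a) && (j == b) && (a <= m)%N && (b <= n)%N)%:Z.

(* action of f on V(m) (x) V(n):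
   f (f^a phi_m (x) f^b phi_n) = f^(a+1) phi_m (x) f^b phi_n + f^a phi_m (x) f^(b+1) phi_n,
   with f^(m+1) phi_m = 0 and f^(n+1) phi_n = 0. *)
Definition f_act (m n : nat) (v : tvec) : tvec :=
  fun i j =>
    if (i <= m)%N && (j <= n)%N then
      (if i is i'.+1 then v i' j else 0) + (if j is j'.+1 then v i j' else 0)
    else 0.

Definition phi (m n k : nat) : tvec :=
  fun i j => \sum_(0 <= l < k.+1)
     ((-1) ^+ l * ('C(m - l, k - l))%:Z * ('C(n - k + l, l))%:Z * tbasis m n l (k - l) i j).

Definition coord_c (m n k i j : nat) : int :=
  iter (i + j - k) (f_act m n) (phi m n k) i j.

(* ---------- Formal power series in two variables x, y over int ----------
   s a b = coefficient of x^a y^b. *)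
Definition pser := nat -> nat -> int.
Definition ps_const (c : int) : pser := fun a b => if (a == 0%N) && (b == 0%N) then c else 0.
Definition ps_x : pser := fun a b => ((a == 1%N) && (b == 0%N))%:Z.
Definition ps_y : pser := fun a b => ((a == 0%N) && (b == 1%N))%:Z.
Definition ps_add (s t : pser) : pser := fun a b => s a b + t a b.
Definition ps_opp (s : pser) : pser := fun a b => - s a b.
Definition ps_mul (s t : pser) : pser :=
  fun a b => \sum_(a1 < a.+1) \sum_(b1 < b.+1) s a1 b1 * t (a - a1)%N (b - b1)%N.
Definition ps_pow (s : pser) (e : nat) : pser := iter e (ps_mul s) (ps_const 1).
Definition ps_eq (s t : pser) : Prop := forall a b, s a b = t a b.

Definition numer (k i j : nat) : pser := ps_pow (ps_add ps_x ps_y) (i + j - k).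
Definition denom (m n k : nat) : pser :=
  ps_mul (ps_pow (ps_add (ps_const 1) (ps_opp ps_x)) (m - k + 1))
         (ps_pow (ps_add (ps_const 1) ps_y) (n - k + 1)).

(* Main.v *)
Require Import Defs.
From HB Require Import structures.
From mathcomp Require Import all_boot all_order all_algebra.
From mathcomp Require Import ring zify.
Import GRing.Theory.
Local Open Scope ring_scope.

Notation PP := {poly {poly int}}.
Definition coef2 (P : PP) (a b : nat) : int := (P`_a)`_b.
Definition agree (M : nat) (s : pser) (P : PP) :=
  forall a b, (a < M)%N -> (b < M)%N -> s a b = coef2 P a b.

Lemma agree_mul M s t P Q : agree M s P -> agree M t Q -> agree M (ps_mul s t) (P * Q).
Proof.
move=> hs ht a b ha hb; rewrite /ps_mul /coef2 coefM coef_sum.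
apply: eq_bigr => a1 _; rewrite coefM; apply: eq_bigr => b1 _.
have ha1 : (a1 < M)%N by apply: leq_ltn_trans ha; rewrite -ltnS.
have hb1 : (b1 < M)%N by apply: leq_ltn_trans hb; rewrite -ltnS.
have ha2 : (a - a1 < M)%N by apply: leq_ltn_trans (leq_subr _ _) ha.
have hb2 : (b - b1 < M)%N by apply: leq_ltn_trans (leq_subr _ _) hb.
by rewrite hs // ht.
Qed.

Lemma agree_add M s t P Q : agree M s P -> agree M t Q -> agree M (ps_add s t) (P + Q).
Proof. by move=> hs ht a b ha hb; rewrite /ps_add /coef2 hs // ht // !coefD. Qed.

Lemma agree_opp M s P : agree M s P -> agree M (ps_opp s) (- P).
Proof. by move=> hs a b ha hb; rewrite /ps_opp /coef2 hs // !coefN. Qed.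

Lemma agree_const M c : agree M (ps_const c) (c%:P%:P).
Proof.
move=> a b _ _; rewrite /ps_const /coef2 coefC.
by case: (a == 0%N) => /=; rewrite ?coefC ?coef0 //; case: (b == 0%N).
Qed.

Lemma agree_x M : agree M ps_x 'X.
Proof.
move=> a b _ _; rewrite /ps_x /coef2 coefX.
case: (a == 1%N) => /=; rewrite ?coef1 ?coef0 //; by case: (b == 0%N).
Qed.

Lemma agree_y M : agree M ps_y ('X%:P).
Proof.
move=> a b _ _; rewrite /ps_y /coef2 coefC.
case: (a == 0%N) => /=; rewrite ?coefX ?coef0 //; by case: (b == 1%N).
Qed.

Lemma agree_pow M s P e : agree M s P -> agree M (ps_pow s e) (P ^+ e).
Proof.
move=> hs; elim: e => [|e IH]; first exact: agree_const.
by rewrite exprS; apply: agree_mul.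
Qed.

Definition trunc (M : nat) (s : pser) : PP := \poly_(a < M) \poly_(b < M) s a b.
Lemma agree_trunc M s : agree M s (trunc M s).
Proof. by move=> a b ha hb; rewrite /coef2 /trunc !coef_poly ha; rewrite coef_poly hb. Qed.

Lemma agree_refl M P : agree M (coef2 P) P.
Proof. by []. Qed.

Lemma agree_eq M s t P : agree M s P -> agree M t P -> forall a b, (a < M)%N -> (b < M)%N -> s a b = t a b.
Proof. by move=> h1 h2 a b ha hb; rewrite h1 // h2. Qed.

Lemma agree_trans M s P Q : agree M s P -> agree M (coef2 P) Q -> agree M s Q.
Proof. by move=> h1 h2 a b ha hb; rewrite h1 // h2. Qed.
Arguments agree_mul {M s t P Q}.
Arguments agree_add {M s t P Q}.
Arguments agree_opp {M s P}.
Arguments agree_pow {M s P}.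
Arguments agree_eq {M s t P}.
Arguments agree_trans {M s P Q}.

Definition lowEq1 (M : nat) (p q : {poly int}) := forall a, (a < M)%N -> p`_a = q`_a.

Lemma low1_mul M p p' q q' : lowEq1 M p p' -> lowEq1 M q q' -> lowEq1 M (p * q) (p' * q').
Proof.
move=> hp hq a ha; rewrite !coefM; apply: eq_bigr => a1 _.
have ha1 : (a1 < M)%N by apply: leq_ltn_trans ha; rewrite -ltnS.
have ha2 : (a - a1 < M)%N by apply: leq_ltn_trans (leq_subr _ _) ha.
by rewrite hp // hq.
Qed.

Arguments low1_mul {M p p' q q'}.
Definition qser (M : nat) (s : int) (A : nat) : {poly int} :=
  \poly_(a < M) (s ^+ a * ('C(a + A, a))%:R).

Lemma coef_mul1X (p : {poly int}) s a :
  (p * (1 - s%:P * 'X))`_a = p`_a - (if a == 0%N then 0 else p`_(a.-1) * s).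
Proof. by rewrite mulrBr mulr1 coefB mulrA coefMX coefMC. Qed.

Lemma qstep M s A : lowEq1 M (qser M s A.+1 * (1 - s%:P * 'X)) (qser M s A).
Proof.
move=> a ha; rewrite coef_mul1X /qser !coef_poly ha.
case: a ha => [|a] ha /=; first by rewrite !bin0 subr0.
rewrite (ltnW ha) /= !addnS binS -addSn natrD exprS.
ring.
Qed.

Lemma qbase M s : lowEq1 M (qser M s 0 * (1 - s%:P * 'X)) 1.
Proof.
move=> a ha; rewrite coef_mul1X /qser !coef_poly ha coef1.
case: a ha => [|a] ha /=; first by rewrite !binn subr0 expr0 mulr1.
rewrite (ltnW ha) /= !addn0 !binn exprS; ring.
Qed.

Lemma qinv M s A : lowEq1 M (qser M s A * (1 - s%:P * 'X) ^+ A.+1) 1.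
Proof.
elim: A => [|A IH]; first by rewrite expr1; apply: qbase.
move=> a ha; rewrite exprS mulrA.
rewrite (low1_mul (qstep M s A) (fun a _ => erefl _)) //.
exact: IH.
Qed.

Definition lowEq M (P Q : PP) := agree M (coef2 P) Q.

Lemma low_mul M P P' Q Q' : lowEq M P P' -> lowEq M Q Q' -> lowEq M (P * Q) (P' * Q').
Proof.
move=> h1 h2 a b ha hb.
by rewrite -(agree_mul (agree_refl M P) (agree_refl M Q)) // (agree_mul h1 h2).
Qed.

Arguments low_mul {M P P' Q Q'}.
Section Lift.
Variables (m n k M : nat).

Definition Dp : PP := (1%:P%:P + - 'X) ^+ (m - k + 1) * (1%:P%:P + 'X%:P) ^+ (n - k + 1).
Definition qx := qser M 1 (m - k).
Definition qy := qser M (-1) (n - k).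
Definition Qp : PP := map_poly polyC qx * qy%:P.
Definition Qs : pser := fun a b =>
  (1 ^+ a * ('C(a + (m - k), a))%:R) * ((-1) ^+ b * ('C(b + (n - k), b))%:R).

Lemma agree_denom : agree M (denom m n k) Dp.
Proof.
apply: agree_mul; apply: agree_pow; apply: agree_add; try apply: agree_const.
  by apply: agree_opp; apply: agree_x.
exact: agree_y.
Qed.

Lemma agree_Qs : agree M Qs Qp.
Proof.
move=> a b ha hb; rewrite /coef2 /Qp coefMC coef_map /= coefCM /qx /qy /qser.
by rewrite !coef_poly ha hb.
Qed.

Lemma low_QD : lowEq M (Qp * Dp) 1.
Proof.
have -> : Qp * Dp = (map_poly polyC qx * (1%:P%:P + - 'X) ^+ (m - k + 1)) *
                     (qy%:P * (1%:P%:P + 'X%:P) ^+ (n - k + 1)).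
  by rewrite /Qp /Dp; ring.
have hex : map_poly polyC qx * (1%:P%:P + - 'X) ^+ (m - k + 1) =
          map_poly polyC (qx * (1 - 1%:P * 'X) ^+ (m - k).+1).
  by rewrite rmorphM rmorphXn rmorphB /= !polyC1 mul1r map_polyX rmorph1 addn1.
have hey : qy%:P * (1%:P%:P + 'X%:P) ^+ (n - k + 1) =
          (qy * (1 - (-1)%:P * 'X) ^+ (n - k).+1)%:P.
  rewrite rmorphM rmorphXn /= addn1; congr (_ * _ ^+ _).
  by rewrite polyCN mulNr opprK polyC1 mul1r polyCD !polyC1.
rewrite hex hey -[X in lowEq _ _ X]mulr1; apply: low_mul.
  move=> a b ha hb; rewrite /coef2 coef_map /= (qinv _ _ _ _ ha) coef1.
  rewrite coef1; case: (a == 0%N) => /=; rewrite ?coefC ?coef1 ?coef0 //; by case: (b == 0%N).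
move=> a b ha hb; rewrite /coef2 coefC coef1 (fun_if (fun p : {poly int} => p`_b)).
rewrite (qinv _ _ _ _ hb) coef0.
by case: (a == 0%N); rewrite ?coef0 ?coef1.
Qed.
End Lift.

Definition XY : PP := 'X + 'X%:P.
Lemma agree_xy M : agree M (ps_add ps_x ps_y) XY.
Proof. exact: agree_add (agree_x M) (agree_y M). Qed.

Section G.
Variables (m n k : nat).
Definition G (t : nat) : pser := ps_mul (ps_pow (ps_add ps_x ps_y) t) (Qs m n k).

Lemma agree_G M t : agree M (G t) (XY ^+ t * Qp m n k M).
Proof. exact: agree_mul (agree_pow t (agree_xy M)) (agree_Qs m n k M). Qed.

Lemma G0 a b : G 0 a b = Qs m n k a b.
Proof.
have h : agree (a + b).+1 (G 0) (Qp m n k (a + b).+1).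
  by move=> x y hx hy; rewrite (agree_G (a + b).+1 0) // expr0 mul1r.
by rewrite (agree_eq h (agree_Qs m n k _)) //; lia.
Qed.

Lemma Gstep t a b : G t.+1 a b =
  (if a is a'.+1 then G t a' b else 0) + (if b is b'.+1 then G t a b' else 0).
Proof.
pose M := (a + b).+1.
have hM : (a < M)%N /\ (b < M)%N by rewrite /M; split; lia.
clearbody M.
case: hM => ha hb.
rewrite (agree_G M t.+1) // exprS -mulrA /XY mulrDl /coef2 coefD coefXM coefCM.
rewrite [_ * _`_a]mulrC coefD coefMX.
case: a ha => [|a] ha; case: b hb => [|b] hb /=; rewrite ?coef0 ?add0r ?addr0 //;
  rewrite ?(agree_G M t) //; lia.
Qed.
End G.

Lemma phi_val m n k i j : (k <= m)%N -> (k <= n)%N ->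
  phi m n k i j = if [&& (i <= m)%N, (j <= n)%N & (i + j == k)%N] then G m n k 0 j i else 0.
Proof.
move=> km kn; rewrite /phi G0 /Qs /tbasis.
case: ifP => [/and3P [im jn /eqP ijk]|hno].
  have ik : (i < k.+1)%N by lia.
  rewrite (bigD1_seq i) /=; last 2 first.
  - by rewrite /index_iota ?iota_uniq ?mem_iota; lia.
  - by rewrite /index_iota ?iota_uniq ?mem_iota; lia.
  rewrite big1_seq ?addr0; last first.
    move=> l /andP [hl _]; have -> : (i == l) = false by rewrite eq_sym; exact: negbTE.
    by rewrite /= mulr0.
  have -> : (j == k - i)%N by apply/eqP; lia.
  rewrite eqxx im /= (_ : (k - i <= n)%N) /=; last by lia.
  have e1 : (j + (m - k) = m - i)%N by lia.
  have e2 : (k - i = j)%N by lia.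
  have e3 : (i + (n - k) = n - k + i)%N by lia.
  rewrite e1 e2 e3 !natz expr1n mul1r; ring.
rewrite big1_seq // => l; rewrite mem_index_iota => hlk.
case E : ((i == l) && (j == (k - l)%N) && (l <= m)%N && (k - l <= n)%N); last by rewrite mulr0.
move: E => /andP [/andP [/andP [/eqP il /eqP jl] lm] kln].
exfalso; move: hno; rewrite il lm jl kln /=.
have -> : (l + (k - l) == k)%N by apply/eqP; lia.
by [].
Qed.

Lemma V_val m n k t i j : (k <= m)%N -> (k <= n)%N ->
  iter t (f_act m n) (phi m n k) i j =
  if [&& (i <= m)%N, (j <= n)%N & (i + j == k + t)%N] then G m n k t j i else 0.
Proof.
move=> km kn; elim: t i j => [|t IH] i j; first by rewrite /= phi_val // addn0.
rewrite iterS /f_act.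
case: (boolP ((i <= m)%N && (j <= n)%N)) => [/andP [im jn]|hr]; last first.
  by case: (i <= m)%N hr => //=; case: (j <= n)%N.
rewrite im jn /= Gstep.
case: i im => [|i] im; case: j jn => [|j] jn /=; rewrite ?add0r ?addr0 ?IH.
all: rewrite ?add0n ?addn0 ?addSn ?addnS ?eqSS /=.
- done.
- by rewrite (ltnW jn) /=.
- by rewrite (ltnW im) /=.
- by rewrite (ltnW im) (ltnW jn) im jn /=; case: ifP => _; rewrite ?addr0 // addrC.
Qed.

Theorem mainTheorem4 (m n k i j : nat) :
  (k <= minn m n)%N -> (i <= m)%N -> (j <= n)%N ->
  (k <= i + j)%N -> (i + j <= m + n - k)%N ->
  (exists S : pser, ps_eq (ps_mul S (denom m n k)) (numer k i j)) /\
  (forall S : pser, ps_eq (ps_mul S (denom m n k)) (numer k i j) ->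
     S j i = coord_c m n k i j).
Proof.
move=> hk im jn kij _.
have km : (k <= m)%N by move: hk; rewrite leq_min => /andP [].
have kn : (k <= n)%N by move: hk; rewrite leq_min => /andP [].
pose Np : PP := XY ^+ (i + j - k).
have aN : forall M, agree M (numer k i j) Np.
  by move=> M; apply: agree_pow; apply: agree_xy.
pose S0 := ps_mul (numer k i j) (Qs m n k).
have aS0 : forall M, agree M S0 (Np * Qp m n k M).
  by move=> M; apply: agree_mul (aN M) (agree_Qs m n k M).
split.
  exists S0 => a b.
  pose M := (a + b).+1.
  have ha : (a < M)%N by rewrite /M; lia.
  have hb : (b < M)%N by rewrite /M; lia.
  clearbody M.
  rewrite (agree_mul (aS0 M) (agree_denom m n k M)) // (aN M) //.
  rewrite -mulrA.
  have := low_mul (agree_refl M Np) (low_QD m n k M).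
  by move=> h; rewrite (h a b ha hb) mulr1.
move=> S hS.
pose M := (j + i).+1.
have ha : (j < M)%N by rewrite /M; lia.
have hb : (i < M)%N by rewrite /M; lia.
clearbody M.
pose T := trunc M S.
have h1 : lowEq M (T * Dp m n k) Np.
  move=> a b xa xb.
  by rewrite -(agree_mul (agree_trunc M S) (agree_denom m n k M)) // hS (aN M).
have h2 := low_mul h1 (agree_refl M (Qp m n k M)).
have h3 := low_mul (agree_refl M T) (low_QD m n k M).
have -> : S j i = S0 j i.
  rewrite (agree_trunc M S) // (aS0 M) // -(h2 j i ha hb) -mulrA [Dp _ _ _ * _]mulrC.
  by rewrite (h3 j i ha hb) mulr1.
have -> : S0 j i = G m n k (i + j - k) j i by [].
rewrite /coord_c V_val // im jn /=.
by rewrite subnKC // eqxx.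
Qed.
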